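(* Let $B_n(y)=\sum_{k=0}^n\frac{1}{n+1}\binom{2n+2}{n-k}\binom{n+k}{k}y^k$ be the Borel polynomials. Consider the Riordan array $$L=\left(\frac{1+xy}{(1+(y+1)x)^2},\ \frac{x}{(1+(y+1)x)^2}\right).$$ Then the first column of $L^{-1}$ is $(B_0(y),B_1(y),B_2(y),\dots)^T$, i.e. its generating function is $\sum_n B_n(y)x^n$. Equivalently, $B_n(y)$ is the $n$-th moment of the family of orthogonal polynomials $P_n(x)$ defined by $P_0(x)=1$, $P_1(x)=x-y-2$ and $$P_n(x)=(x-2(y+1))P_{n-1}(x)-(y+1)^2P_{n-2}(x)\quad(n\ge2),$$ i.e. $B_n(y)=\mathcal L(x^n)$ for the linear functional $\mathcal L$ with $\mathcal L(1)=1$ and $\mathcal L(P_n)=0$ for $n\ge1$.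
   Context: A Riordan array $(g(x),f(x))$ (with $g(0)\ne0$, $f(0)=0$, $f'(0)\ne0$) is the lower-triangular matrix with $(n,k)$ entry $[x^n]g(x)f(x)^k$. Riordan arrays form a group under matrix multiplication with $(g,f)\cdot(u,v)=(g\,u(f),v(f))$ and $(g,f)^{-1}=(1/g(\bar f),\bar f)$ where $\bar f$ is the compositional inverse of $f$. Here coefficients are polynomials in $y$. *)

(* Defs.v *)
From HB Require Import structures.
From mathcomp Require Import all_boot all_order all_algebra.
Set Implicit Arguments. Unset Strict Implicit. Unset Printing Implicit Defensive.
Import Order.TTheory GRing.Theory Num.Theory.
Local Open Scope ring_scope.

Definition pser (R : Type) := nat -> R.

Section PS.
Variable R : unitRingType.

Definition ps_of_poly (p : {poly R}) : pser R := fun n => p`_n.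

Definition ps_mul (a b : pser R) : pser R :=
  fun n => \sum_(i < n.+1) a i * b (n - i)%N.

Definition ps_one : pser R := fun n => if n == 0%N then 1 else 0.

Definition ps_exp (a : pser R) (k : nat) : pser R := iter k (ps_mul a) ps_one.

(* list of the first n+1 coefficients of the multiplicative inverse of a
   (meaningful when a 0 is a unit) *)
Fixpoint ps_inv_list (a : pser R) (n : nat) : seq R :=
  match n with
  | 0 => [:: (a 0%N)^-1]
  | m.+1 => let l := ps_inv_list a m in
      rcons l (- (a 0%N)^-1 * \sum_(i < m.+1) a (m.+1 - i)%N * nth 0 l i)
  end.

Definition ps_inv (a : pser R) : pser R := fun n => nth 0 (ps_inv_list a n) n.

Definition riordan (g f : pser R) (n k : nat) : R := ps_mul g (ps_exp f k) n.

Definition riordan_trunc (g f : pser R) (N : nat) : 'M[R]_N :=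
  \matrix_(i < N, j < N) riordan g f i j.
End PS.

(* Coefficients are polynomials in y, y := 'X : {poly rat};
   the series variable x is 'X : {poly {poly rat}}. *)
Definition y : {poly rat} := 'X.

Definition Borel (n : nat) : {poly rat} :=
  \sum_(k < n.+1) ((n.+1)%:R^-1 * ('C(2 * n + 2, n - k) * 'C(n + k, k))%:R) *: y ^+ k.

Definition denL : {poly {poly rat}} := (1 + (y + 1) *: 'X) ^+ 2.

Definition gL : pser {poly rat} :=
  ps_mul (ps_of_poly (1 + y *: 'X)) (ps_inv (ps_of_poly denL)).

Definition fL : pser {poly rat} :=
  ps_mul (ps_of_poly 'X) (ps_inv (ps_of_poly denL)).

Fixpoint Ppair (n : nat) : {poly {poly rat}} * {poly {poly rat}} :=
  match n with
  | 0 => (1, 'X - (y + 2)%:P)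
  | m.+1 => let (p, q) := Ppair m in
      (q, ('X - (2%:R * (y + 1))%:P) * q - ((y + 1) ^+ 2)%:P * p)
  end.

Definition P (n : nat) : {poly {poly rat}} := (Ppair n).1.

Definition borel_functional (p : {poly {poly rat}}) : {poly rat} :=
  \sum_(i < size p) p`_i * Borel i.

(* Main.v *)
Require Import Defs.
From HB Require Import structures.
From mathcomp Require Import all_boot all_order all_algebra.
From mathcomp Require Import zify ring lra.
Import Num.Theory.
Import GRing.Theory.
Local Open Scope ring_scope.
Set Implicit Arguments. Unset Strict Implicit. Unset Printing Implicit Defensive.

Section PSgen.
Variable R : comUnitRingType.

Lemma size_inv_list (a : pser R) n : size (ps_inv_list a n) = n.+1.
Proof. by elim: n => [|n IH] //=; rewrite size_rcons IH. Qed.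

Lemma nth_inv_list (a : pser R) n i : (i <= n)%N -> nth 0 (ps_inv_list a n) i = ps_inv a i.
Proof.
elim: n i => [|n IH] i hi.
  by move: hi; rewrite leqn0 => /eqP ->.
rewrite leq_eqVlt in hi; case/orP: hi => [/eqP -> //| hi].
by rewrite /= nth_rcons size_inv_list hi IH.
Qed.

Lemma ps_invS (a : pser R) m : ps_inv a m.+1 =
  - (a 0%N)^-1 * \sum_(i < m.+1) a (m.+1 - i)%N * ps_inv a i.
Proof.
rewrite /ps_inv /= nth_rcons size_inv_list ltnn eqxx; congr (_ * _).
by apply: eq_bigr => i _; rewrite nth_inv_list // -ltnS.
Qed.

Lemma ps_mul_inv (a : pser R) n : a 0%N \is a GRing.unit -> ps_mul a (ps_inv a) n = ps_one R n.
Proof.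
move=> ua; rewrite /ps_mul /ps_one; case: n => [|m].
  by rewrite big_ord1 /ps_inv /= mulrV.
rewrite big_ord_recl /= ps_invS mulrA mulrN mulrV // mulN1r.
rewrite [X in _ + X](reindex_inj rev_ord_inj) /=.
rewrite [X in _ + X](eq_bigr (fun i : 'I_m.+1 => a (m.+1 - i)%N * ps_inv a i)) ?addNr //.
move=> i _; have hi := ltn_ord i; rewrite /bump /=.
have -> : (1 + (m - i) = m.+1 - i)%N by lia.
by have -> : (m.+1 - (m.+1 - i) = i)%N by lia.
Qed.
End PSgen.

Notation RR := {poly rat}.
Notation PP := {poly {poly rat}}.

Section Trunc.
Variable N : nat.
Definition eqm (p q : PP) := forall i, (i < N)%N -> p`_i = q`_i.
Definition tr (s : pser RR) : PP := \poly_(i < N) s i.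

Lemma eqm_refl p : eqm p p. Proof. by []. Qed.
Lemma eqm_sym p q : eqm p q -> eqm q p. Proof. by move=> h i hi; rewrite h. Qed.
Lemma eqm_trans p q r : eqm p q -> eqm q r -> eqm p r.
Proof. by move=> h1 h2 i hi; rewrite h1 ?h2. Qed.
Lemma eqm_add p q p' q' : eqm p p' -> eqm q q' -> eqm (p + q) (p' + q').
Proof. by move=> h1 h2 i hi; rewrite !coefD h1 ?h2. Qed.
Lemma eqm_opp p p' : eqm p p' -> eqm (- p) (- p').
Proof. by move=> h1 i hi; rewrite !coefN h1. Qed.
Lemma eqm_sub p q p' q' : eqm p p' -> eqm q q' -> eqm (p - q) (p' - q').
Proof. by move=> h1 h2; apply: eqm_add => //; apply: eqm_opp. Qed.
Lemma eqm_mul p q p' q' : eqm p p' -> eqm q q' -> eqm (p * q) (p' * q').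
Proof.
move=> h1 h2 i hi; rewrite !coefM; apply: eq_bigr => j _.
have hj := ltn_ord j.
rewrite h1 ?h2 //; lia.
Qed.
Lemma eqm_exp p p' k : eqm p p' -> eqm (p ^+ k) (p' ^+ k).
Proof. by move=> h; elim: k => [|k IH]; rewrite ?expr0 // !exprS; apply: eqm_mul. Qed.
Lemma eqm0 p p' : p = p' -> eqm p p'. Proof. by move=> ->. Qed.

Lemma coef_tr s i : (i < N)%N -> (tr s)`_i = s i.
Proof. by move=> hi; rewrite coef_poly hi. Qed.

Lemma tr_mul s t : eqm (tr (ps_mul s t)) (tr s * tr t).
Proof.
move=> i hi; rewrite coef_tr // coefM; apply: eq_bigr => j _.
have hj := ltn_ord j.
rewrite !coef_tr //; lia.
Qed.

Lemma tr_of_poly p : eqm (tr (ps_of_poly p)) p.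
Proof. by move=> i hi; rewrite coef_tr. Qed.

Lemma tr_one : eqm (tr (ps_one RR)) 1.
Proof. by move=> i hi; rewrite coef_tr // coef1 /ps_one; case: (i == 0%N). Qed.

Lemma tr_exp f k : eqm (tr (ps_exp f k)) (tr f ^+ k).
Proof.
elim: k => [|k IH]; first by rewrite expr0; apply: tr_one.
rewrite exprS /ps_exp iterS -/(ps_exp f k).
by apply: eqm_trans (tr_mul _ _) _; apply: eqm_mul.
Qed.
End Trunc.

Definition fr (n : nat) : rat := (n`!)%:R.
Lemma fr_neq0 n : fr n != 0.
Proof. by rewrite /fr pnatr_eq0 -lt0n fact_gt0. Qed.
Lemma frS n : fr n.+1 = (n.+1)%:R * fr n.
Proof. by rewrite /fr factS natrM. Qed.
Lemma binE n m r : n = (m + r)%N -> ('C(n, m))%:R = fr n / (fr m * fr r) :> rat.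
Proof.
move=> ->; have := bin_fact (leq_addr r m).
rewrite addKn => h.
have hn : fr m * fr r != 0 by rewrite mulf_neq0 ?fr_neq0.
move: hn; rewrite /fr => hn; by rewrite -h !natrM mulfK.
Qed.

Ltac addpos := repeat match goal with n : nat |- _ =>
  assert_fails (have : (0 <= n%:R :> rat) by assumption);
  have ? : (0 <= n%:R :> rat) by apply: ler0n end.
Ltac side := repeat (apply/andP; split);
  first [ by rewrite pnatr_eq0 -lt0n fact_gt0
        | apply: lt0r_neq0; addpos; lra ].

Definition beta (n j : nat) : rat :=
  (n.+1)%:R^-1 * ('C(2 * n + 2, n - j) * 'C(n + j, j))%:R.

Lemma betaE j d : beta (j + d) j =
  fr (2 * j + 2 * d + 2) / (fr (j + d) * fr j * fr d
     * (j + d + 1)%:R * (2 * j + d + 1)%:R * (2 * j + d + 2)%:R).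
Proof.
rewrite /beta natrM.
rewrite (_ : (j + d - j = d)%N); last by lia.
rewrite (@binE _ d (2 * j + d + 2)%N); last by lia.
rewrite (@binE _ j (j + d)%N); last by lia.
rewrite (_ : (2 * (j + d) + 2 = 2 * j + 2 * d + 2)%N); last by lia.
rewrite (_ : (2 * j + d + 2 = (2 * j + d).+2)%N); last by lia.
rewrite (_ : (j + d + j = 2 * j + d)%N); last by lia.
rewrite !frS.
have h1 := fr_neq0 (2 * j + d).
have h2 := fr_neq0 (j + d).
have h3 := fr_neq0 j. have h4 := fr_neq0 d.
have h5 := fr_neq0 (2 * j + 2 * d + 2).
rewrite (_ : (2 * j + d).+1 = (2 * j + d + 1)%N); last by lia.
rewrite (_ : (2 * j + d + 1).+1 = (2 * j + d + 2)%N); last by lia.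
rewrite (_ : (j + d).+1 = (j + d + 1)%N); last by lia.
field.
side.
Qed.

Definition catr (k : nat) : rat := ('C(2 * k + 2, k.+1))%:R - ('C(2 * k + 2, k))%:R.

Lemma catE k : catr k = fr (2 * k + 2) / (fr k.+1 * fr k.+2).
Proof.
rewrite /catr (@binE _ k.+1 k.+1); last by lia.
rewrite (@binE _ k k.+2); last by lia.
rewrite !frS.
have h1 := fr_neq0 k. have h2 := fr_neq0 (2 * k + 2).
field; side.
Qed.

Lemma case_b i d : beta (i + d.+2) i + beta (i.+1 + d) i.+1 =
  ('C(i + d + 3, i.+1))%:R * catr (i + d + 1).
Proof.
rewrite !betaE catE (@binE _ i.+1 d.+2); last by lia.
rewrite (_ : (2 * i + 2 * d.+2 + 2 = (2 * i + 2 * d + 4).+2)%N); last by lia.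
rewrite (_ : (2 * i.+1 + 2 * d + 2 = (2 * i + 2 * d + 4))%N); last by lia.
rewrite (_ : (2 * (i + d + 1) + 2 = (2 * i + 2 * d + 4))%N); last by lia.
rewrite (_ : (i + d.+2 = (i + d + 1).+1)%N); last by lia.
rewrite (_ : (i.+1 + d = (i + d + 1))%N); last by lia.
rewrite (_ : (i + d + 3 = (i + d + 1).+2)%N); last by lia.
rewrite !frS.
have h1 := fr_neq0 i. have h2 := fr_neq0 d. have h3 := fr_neq0 (i + d + 1).
have h4 := fr_neq0 (2 * i + 2 * d + 4).
field; side.
Qed.

Ltac fin := rewrite !frS;
  repeat match goal with |- context [fr ?n] =>
    match goal with _ : is_true (fr n != 0) |- _ => fail 1 | _ => have ? := fr_neq0 n end end;
  field; side.

Lemma case_a k : beta k 0 = ('C(k.+2, 0))%:R * catr k.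
Proof.
have := betaE 0 k; rewrite add0n => ->.
rewrite catE bin0.
rewrite (_ : (2 * 0 + 2 * k + 2 = 2 * k + 2)%N); last by lia.
rewrite (_ : fr 0 = 1) //; fin.
Qed.

Lemma case_c k : beta k.+1 k = ('C(k.+2, k.+1))%:R * catr k.
Proof.
have := betaE k 1; rewrite addn1 => ->.
rewrite catE (@binE _ k.+1 1); last by lia.
rewrite (_ : (2 * k + 2 * 1 + 2 = (2 * k + 2).+2)%N); last by lia.
rewrite (_ : fr 1 = 1) //; fin.
Qed.

Lemma case_d k : beta k.+1 k.+1 = catr k.
Proof.
have := betaE k.+1 0; rewrite addn0 => ->.
rewrite catE.
rewrite (_ : (2 * k.+1 + 2 * 0 + 2 = (2 * k + 2).+2)%N); last by lia.
rewrite (_ : fr 0 = 1) //; fin.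
Qed.

Lemma coefid k j :
  (if j is i.+1 then (if (i < k.+2)%N then beta k.+1 i else 0) else 0)
  + (if (j < k.+1)%N then beta k j else 0) = ('C(k.+2, j))%:R * catr k.
Proof.
case: j => [|i]; first by rewrite /= add0r case_a.
case: (ltngtP i k) => hik.
- have [d ek] : exists d, k = (i + d.+1)%N by exists (k - i.+1)%N; lia.
  subst k.
  have c1 : (i < (i + d.+1).+2)%N = true by lia.
  have c2 : (i.+1 < (i + d.+1).+1)%N = true by lia.
  rewrite c1 c2.
  have := case_b i d.
  have e1 : (i + d.+2 = (i + d.+1).+1)%N by lia.
  have e2 : (i.+1 + d = i + d.+1)%N by lia.
  have e3 : (i + d + 3 = (i + d.+1).+2)%N by lia.
  have e4 : (i + d + 1 = i + d.+1)%N by lia.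
  by rewrite e1 e2 e3 e4.
- have c2 : (i.+1 < k.+1)%N = false by lia.
  rewrite c2 addr0.
  case: (ltngtP i k.+1) => hik2; first by lia.
  + have c1 : (i < k.+2)%N = false by lia.
    by rewrite c1 bin_small ?mul0r //; lia.
  + subst i; have c : (k.+1 < k.+2)%N = true by lia.
    rewrite c binn mul1r; exact: case_d.
- subst i; have c : (k < k.+2)%N = true by lia.
  rewrite c.
  case: ifP => [h|_]; first by move: h; rewrite ltnn.
  rewrite addr0; exact: case_c.
Qed.


Definition acoef (m k : nat) : RR := match k with
  | 0 => 1 | k'.+1 => ('C(2*k'+m+1, k'.+1))%:R - ('C(2*k'+m+1, k'))%:R end.

Lemma BorelE n : Borel n = \poly_(j < n.+1) beta n j.
Proof. by rewrite /Borel poly_def. Qed.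

Lemma coef_cexp n j : (((y + 1) ^+ n : RR)`_j) = ('C(n, j))%:R.
Proof.
rewrite exprD1n (_ : \sum_(i < n.+1) y ^+ i *+ 'C(n, i) = \poly_(i < n.+1) ('C(n, i))%:R).
  rewrite coef_poly; case: ltnP => // h; by rewrite bin_small.
by rewrite poly_def; apply: eq_bigr => i _; rewrite scaler_nat.
Qed.

Lemma acoef1 k : acoef 1 k.+1 = (catr k)%:P.
Proof.
rewrite /acoef /catr rmorphB /= !polyC_natr.
by rewrite (_ : (2 * k + 1 + 1 = 2 * k + 2)%N) //; lia.
Qed.

Lemma Brel k : y * Borel k + (if k is k'.+1 then Borel k' else 0) =
   (y + 1) ^+ k.+1 * acoef 1 k - (k == 0%N)%:R.
Proof.
case: k => [|k].
  rewrite /= addr0 mulr1 expr1 (_ : Borel 0 = 1) ?mulr1; first by rewrite addrK.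
  apply/polyP => j; rewrite BorelE coef_poly coef1.
  by case: j => [|j] //=; rewrite /beta /= invr1 mul1r.
rewrite acoef1 /= subr0; apply/polyP => j.
rewrite coefD coefMC coef_cexp !BorelE !coef_poly /y coefXM coef_poly.
rewrite -coefid; case: j => [|j] //=.
Qed.

Lemma acoef0 k : acoef 0 k = (k == 0%N)%:R.
Proof.
case: k => [//|k] /=; rewrite addn0.
have hk : (k <= 2 * k + 1)%N by lia.
by rewrite -(bin_sub hk) (_ : (2 * k + 1 - k = k.+1)%N) ?subrr //; lia.
Qed.

Lemma acoefS m k : acoef m.+1 k.+1 = acoef m k.+1 + acoef m.+2 k.
Proof.
case: k => [|j] /=.
  rewrite !muln0 !add0n !addn1 !bin1 !bin0.
  rewrite [in LHS]mulrSr; ring.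
rewrite (_ : (2 * j.+1 + m.+1 + 1 = (2 * j + m + 3).+1)%N); last by lia.
rewrite (_ : (2 * j.+1 + m + 1 = (2 * j + m + 3))%N); last by lia.
rewrite (_ : (2 * j + m.+2 + 1 = (2 * j + m + 3))%N); last by lia.
rewrite !binS !natrD; ring.
Qed.



Section Main.
Variable N : nat.
Notation cc := (y + 1).
Definition Ivs := ps_inv (ps_of_poly denL).
Definition II := tr N Ivs.
Definition Fp : PP := 'X * II.
Definition Gp : PP := (1 + y *: 'X) * II.

Lemma denE : denL = 1 + (2%:R * cc) *: 'X + (cc ^+ 2) *: 'X^2.
Proof. rewrite /denL -!mul_polyC !polyCM; ring. Qed.

Lemma den0 : denL`_0 = 1.
Proof. by rewrite denE !coefD coef1 !coefZ coefX coefXn /= !mulr0 !addr0. Qed.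

Lemma Ivs0 : Ivs 0%N = 1.
Proof. by rewrite /Ivs /ps_inv /= /ps_of_poly den0 invr1. Qed.

Lemma denI : eqm N (denL * II) 1.
Proof.
eapply eqm_trans; first exact: (eqm_mul (eqm_sym (tr_of_poly (N:=N) denL)) (eqm_refl (N:=N) II)).
eapply eqm_trans; first exact: (eqm_sym (tr_mul _ _)).
move=> i hi; rewrite coef_tr // ps_mul_inv; last by rewrite /ps_of_poly den0 unitr1.
by rewrite coef1 /ps_one; case: (i == 0%N).
Qed.

Lemma riorE i j : (i < N)%N -> riordan gL fL i j = (Gp * Fp ^+ j)`_i.
Proof.
move=> hi; rewrite /riordan -(coef_tr (N:=N)) //.
move: i hi; eapply eqm_trans; first exact: tr_mul.
apply: eqm_mul.
  eapply eqm_trans; first exact: tr_mul.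
  by apply: eqm_mul; [exact: tr_of_poly | apply: eqm_refl].
eapply eqm_trans; first exact: tr_exp. apply: eqm_exp.
eapply eqm_trans; first exact: tr_mul.
by apply: eqm_mul; [exact: tr_of_poly | apply: eqm_refl].
Qed.

Lemma Fp0 : Fp`_0 = 0.
Proof. by rewrite coefXM. Qed.

Lemma FpI : eqm N (Fp * denL) 'X.
Proof.
have -> : Fp * denL = 'X * (denL * II) by rewrite /Fp; ring.
by rewrite -[X in eqm _ _ X]mulr1; apply: eqm_mul => //; apply: denI.
Qed.

Lemma mulF_coef (Q : PP) n : (forall j, (j < n)%N -> Q`_j = 0) -> (Fp * Q)`_n = 0.
Proof.
move=> hQ; rewrite coefM big_ord_recl Fp0 mul0r add0r big1 // => j _.
have hj := ltn_ord j; rewrite hQ ?mulr0 //; rewrite lift0; lia.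
Qed.

Lemma coefFpX j k : (j < k)%N -> (Fp ^+ k)`_j = 0.
Proof. by move=> h; rewrite /Fp exprMn_comm ?coefXnM ?h //; apply: mulrC. Qed.

Definition comp (s : nat -> RR) : PP := \sum_(k < N) s k *: Fp ^+ k.

Lemma comp_ext s t : (forall k, s k = t k) -> comp s = comp t.
Proof. by move=> h; apply: eq_bigr => k _; rewrite h. Qed.

Lemma comp_add s t : comp (fun k => s k + t k) = comp s + comp t.
Proof. by rewrite /comp -big_split; apply: eq_bigr => k _; rewrite scalerDl. Qed.

Lemma comp_scal a s : comp (fun k => a * s k) = a%:P * comp s.
Proof.
rewrite /comp mulr_sumr; apply: eq_bigr => k _.
by rewrite mul_polyC scalerA.
Qed.

Lemma comp_delta : (0 < N)%N -> comp (fun k => (k == 0%N)%:R) = 1.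
Proof.
move=> hN; have [M eM] : exists M, N = M.+1 by exists N.-1; lia.
rewrite /comp eM big_ord_recl /= scale1r expr0 big1 ?addr0 //.
by move=> i _; rewrite scale0r.
Qed.

Lemma comp_shift s : eqm N (comp (fun k => if k is k'.+1 then s k' else 0)) (Fp * comp s).
Proof.
move=> i hi; have [M eM] : exists M, N = M.+1 by exists N.-1; lia.
rewrite /comp eM big_ord_recl /= scale0r add0r mulr_sumr big_ord_recr /= coefD.
rewrite -scalerAr -exprS coefZ coefFpX -?eM // mulr0 addr0.
apply: (congr1 (fun p : PP => p`_i)); apply: eq_bigr => j _.
by rewrite -scalerAr -exprS add0n.
Qed.

Notation cP := (cc%:P : PP).
Definition sq m k : RR := cc ^+ k * acoef m k.
Definition SS m := comp (sq m).
Definition TT m : PP := (1 + cP * 'X) ^+ m.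

Lemma S0 : (0 < N)%N -> SS 0 = 1.
Proof.
move=> hN; rewrite /SS -(comp_delta hN); apply: comp_ext => k.
by rewrite /sq acoef0; case: k => [|k] /=; rewrite ?mulr0 ?mulr1.
Qed.

Lemma Srec m : eqm N (SS m.+1) (SS m + cP * (Fp * SS m.+2)).
Proof.
rewrite /SS (comp_ext (t := fun k => sq m k + cc * (if k is k'.+1 then sq m.+2 k' else 0))); last first.
  move=> [|k].
    by rewrite /sq /= mulr0 addr0 !expr0 !mul1r.
  by rewrite /sq acoefS exprS; ring.
rewrite comp_add comp_scal; apply: eqm_add => //.
by apply: eqm_mul => //; apply: comp_shift.
Qed.

Lemma Trec m : eqm N (TT m.+1) (TT m + cP * (Fp * TT m.+2)).
Proof.
have e : TT m.+2 = TT m * denL.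
  by rewrite /TT /denL -mul_polyC -exprD addn2.
rewrite e (_ : Fp * (TT m * denL) = TT m * (Fp * denL)); last by ring.
have h : eqm N (TT m + cP * (TT m * (Fp * denL))) (TT m + cP * (TT m * 'X)).
  by apply: eqm_add => //; apply: eqm_mul => //; apply: eqm_mul => //; apply: FpI.
eapply eqm_trans; last exact: (eqm_sym h).
by apply: eqm0; rewrite /TT exprS; ring.
Qed.

Lemma S1 : eqm N (SS 1) (1 + cP * 'X).
Proof.
case: (posnP N) => [-> //|hN].
pose D m := SS m - TT m.
have D0 : D 0%N = 0 by rewrite /D S0 // /TT expr0 subrr.
have Drec m : eqm N (D m.+1) (D m + cP * (Fp * D m.+2)).
  have -> : D m + cP * (Fp * D m.+2) = (SS m + cP * (Fp * SS m.+2)) - (TT m + cP * (Fp * TT m.+2)).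
    by rewrite /D; ring.
  by apply: eqm_sub; [apply: Srec | apply: Trec].
have key : forall n, (n < N)%N -> forall m, (D m)`_n = 0.
  elim/ltn_ind => n IH hn m; elim: m => [|m IHm]; first by rewrite D0 coef0.
  rewrite Drec // coefD IHm add0r coefCM mulF_coef ?mulr0 // => j hj.
  by apply: IH => //; lia.
move=> i hi; apply/eqP; rewrite -subr_eq0 -coefB; apply/eqP.
by have := key i hi 1%N; rewrite /D /TT expr1.
Qed.

Definition Hs := comp Borel.
Notation yP := (y%:P : PP).

Lemma Hrel : (0 < N)%N -> eqm N ((yP + Fp) * Hs) (cP * (1 + cP * 'X) - 1).
Proof.
move=> hN.
have e : (yP + Fp) * Hs = yP * Hs + Fp * Hs by ring.
rewrite e.
eapply eqm_trans.
  apply: eqm_add; first exact: eqm_refl.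
  exact: (eqm_sym (comp_shift Borel)).
rewrite /Hs -comp_scal -comp_add.
rewrite (comp_ext (t := fun k => cc * sq 1 k + (-1) * (k == 0%N)%:R)); last first.
  by move=> k; rewrite Brel /sq exprS mulrA mulN1r.
rewrite comp_add !comp_scal comp_delta // -/(SS 1) mulr1.
apply: eqm_add; last by rewrite polyCN polyC1; exact: eqm_refl.
by apply: eqm_mul => //; apply: S1.
Qed.

Lemma polyid : (1 + y *: 'X) * (cP * (1 + cP * 'X) - 1) = yP * denL + ('X : PP).
Proof.
rewrite /denL -!mul_polyC (_ : (y + 1)%:P = yP + 1); last by rewrite polyCD polyC1.
ring.
Qed.

Lemma cancel_lem (E : PP) : eqm N ((yP + Fp) * E) 0 -> eqm N E 0.
Proof.
move=> h; elim/ltn_ind => n IH hn.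
have := h n hn; rewrite mulrDl coefD coefCM mulF_coef ?addr0 ?coef0.
  by move/eqP; rewrite mulf_eq0 polyX_eq0 => /eqP.
by move=> j hj; rewrite IH // ?coef0 //; lia.
Qed.

Lemma GH i : (i < N)%N -> (Gp * Hs)`_i = (i == 0%N)%:R.
Proof.
move=> hi; have hN : (0 < N)%N by lia.
suff: eqm N (Gp * Hs - 1) 0.
  by move=> h; have := h i hi; rewrite coefB coef1 coef0 => /eqP; rewrite subr_eq0 => /eqP.
apply: cancel_lem.
have -> : (yP + Fp) * (Gp * Hs - 1) = Gp * ((yP + Fp) * Hs) - (yP + Fp) by ring.
eapply eqm_trans.
  apply: eqm_sub; last exact: eqm_refl.
  by apply: eqm_mul; [exact: eqm_refl | exact: Hrel].
have -> : Gp * (cP * (1 + cP * 'X) - 1) = yP * (denL * II) + Fp.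
  rewrite /Gp /Fp; transitivity (II * ((1 + y *: 'X) * (cP * (1 + cP * 'X) - 1))); first by ring.
  by rewrite polyid; ring.
apply: (@eqm_trans _ _ (yP * 1 + Fp - (yP + Fp))); last by apply: eqm0; ring.
apply: eqm_sub => //; apply: eqm_add => //; apply: eqm_mul => //; exact: denI.
Qed.

Lemma sumGH i : (i < N)%N -> \sum_(j < N) (Gp * Fp ^+ j)`_i * Borel j = (i == 0%N)%:R.
Proof.
move=> hi; rewrite -(GH hi) /Hs /comp mulr_sumr coef_sum; apply: eq_bigr => j _.
by rewrite -scalerAr coefZ mulrC.
Qed.

Lemma II0 : (0 < N)%N -> II`_0 = 1.
Proof. by move=> hN; rewrite /II coef_tr // Ivs0. Qed.

Lemma diag1 i : (0 < N)%N -> (Gp * Fp ^+ i)`_i = 1.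
Proof.
move=> hN; rewrite /Fp exprMn_comm; last exact: mulrC.
rewrite mulrCA coefXnM ltnn subnn coef0M /Gp coef0M coefD coef1 coefZ coefX /=.
rewrite mulr0 addr0 mul1r II0 // mul1r.
by elim: i => [|i IHi]; rewrite ?expr0 ?coef1 // exprS coef0M II0 // mul1r.
Qed.

Lemma Gden : eqm N (Gp * denL) (1 + y *: 'X).
Proof.
rewrite /Gp -mulrA (mulrC II) -[X in eqm _ _ X]mulr1.
by apply: eqm_mul => //; apply: denI.
Qed.

Definition Lc n k := (Gp * Fp ^+ k)`_n.

Lemma coef_den (Q : PP) n : (Q * denL)`_n =
  Q`_n + 2%:R * cc * (if n is n'.+1 then Q`_n' else 0)
  + cc ^+ 2 * (if n is n'.+2 then Q`_n' else 0).
Proof.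
rewrite denE !mulrDr mulr1 !coefD -!scalerAr !coefZ coefMX coefMXn.
by case: n => [|[|n]]; rewrite ?mulr1 //= ?subSS ?subn0.
Qed.

Lemma Lrel n k : (n < N)%N ->
  Lc n k + 2%:R * cc * (if n is n'.+1 then Lc n' k else 0)
  + cc ^+ 2 * (if n is n'.+2 then Lc n' k else 0)
  = if k is k'.+1 then (if n is n'.+1 then Lc n' k' else 0) else (1 + y *: 'X)`_n.
Proof.
move=> hn; rewrite /Lc -coef_den.
case: k => [|k].
  by rewrite expr0 mulr1; apply: Gden.
have h : eqm N (Gp * Fp ^+ k.+1 * denL) (Gp * Fp ^+ k * 'X).
  rewrite (_ : Gp * Fp ^+ k.+1 * denL = (Gp * Fp ^+ k) * (Fp * denL)); last by rewrite exprSr; ring.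
  by apply: eqm_mul => //; apply: FpI.
by rewrite h // coefMX; case: n hn.
Qed.

End Main.

Lemma solve3 (a b c d : RR) : a + b + c = d -> d - b - c = a.
Proof. by move=> <-; ring. Qed.

Lemma P0 : P 0 = 1. Proof. by []. Qed.
Lemma P1 : P 1 = 'X - (y + 2%:R)%:P. Proof. by []. Qed.
Lemma PSS n : P n.+2 = ('X - (2%:R * (y + 1))%:P) * P n.+1 - ((y + 1) ^+ 2)%:P * P n.
Proof. by rewrite /P /=; case: (Ppair n). Qed.

Lemma Prow N n k : (n < N)%N -> (P n)`_k = Lc N n k.
Proof.
elim/ltn_ind: n k => n IH k hn.
have R := Lrel k hn.
case: n IH hn R => [|[|n]] IH hn R.
- rewrite P0 coef1; move: R; rewrite /= !mulr0 !addr0.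
  case: k => [|k] -> //.
  by rewrite coefD coef1 coefZ coefX mulr0 addr0.
- rewrite P1 coefB coefX coefC; move: R; rewrite /= mulr0 addr0.
  have L0 j : Lc N 0 j = (j == 0%N)%:R.
    rewrite -(IH 0%N) //; last by lia.
    by rewrite P0 coef1.
  case: k => [|k]; rewrite !L0 /=.
    have c1 : ((1 + y *: 'X : PP)`_1) = y by rewrite coefD coef1 coefZ coefX mulr1 add0r.
    rewrite c1 => e.
    have e' := congr1 (fun t => t - 2%:R * (y + 1) * 1) e; rewrite /= addrK in e'.
    rewrite e'.
    by rewrite (_ : 2%:R = 1 + 1 :> {poly rat}) //; ring.
  by rewrite mulr0 addr0 subr0 => <-.
- rewrite PSS mulrBl !coefB coefXM !coefCM.
  move: R; rewrite /=.
  have h1 : (n.+1 < N)%N by lia.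
  have h2 : (n < N)%N by lia.
  case: k => [|k] e /=; rewrite !(IH n.+1) // !(IH n) //; apply: solve3; rewrite e //.
  by rewrite coefD coef1 coefZ coefX mulr0 addr0.
Qed.


Lemma Borel0 : Borel 0 = 1.
Proof.
apply/polyP => j; rewrite BorelE coef_poly coef1.
by case: j => [|j] //=; rewrite /beta /= invr1 mul1r.
Qed.

Theorem mainTheorem7 :
  (forall N : nat,
     riordan_trunc gL fL N.+1 \in unitmx /\
     forall i : 'I_N.+1, invmx (riordan_trunc gL fL N.+1) i ord0 = Borel i)
  /\ borel_functional 1 = 1
  /\ (forall n : nat, (0 < n)%N -> borel_functional (P n) = 0).
Proof.
split; last split.
- move=> M; set N := M.+1; set A := riordan_trunc gL fL N.
  have hN : (0 < N)%N by [].
  have Aij (i j : 'I_N) : A i j = Lc N i j by rewrite /A mxE (riorE (N:=N)).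
  have trig : is_trig_mx A.
    apply/is_trig_mxP => i j hij; rewrite Aij /Lc coefM big1 // => l _.
    rewrite coefFpX ?mulr0 //; have := ltn_ord l; lia.
  have uA : A \in unitmx.
    rewrite unitmxE det_trig // big1 ?unitr1 // => i _.
    by rewrite Aij /Lc diag1.
  split => // i.
  pose v : 'cV[RR]_N := \col_(i < N) Borel i.
  pose e : 'cV[RR]_N := \col_(i < N) (i == 0%N :> nat)%:R.
  have Av : A *m v = e.
    apply/matrixP => p q; rewrite !mxE (ord1 q).
    rewrite -(sumGH (ltn_ord p)); apply: eq_bigr => j _.
    by rewrite Aij mxE.
  have := mulKmx uA v; rewrite Av => /matrixP /(_ i ord0).
  rewrite !mxE => <-.
  rewrite (bigD1 ord0) //= mxE eqxx mulr1 big1 ?addr0 // => j hj.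
  by rewrite mxE (negPf (_ : (j : nat) != 0%N)) ?mulr0.
- by rewrite /borel_functional size_poly1 big_ord1 coef1 Borel0 mul1r.
- move=> n hn.
  pose N := maxn (size (P n)) n.+1.
  have hs : (size (P n) <= N)%N by rewrite leq_maxl.
  have hnN : (n < N)%N by rewrite leq_maxr.
  rewrite /borel_functional (big_ord_widen N (fun i => (P n)`_i * Borel i) hs).
  rewrite big_mkcond /=.
  rewrite (eq_bigr (fun j : 'I_N => (Gp N * Fp N ^+ j)`_n * Borel j)).
    by rewrite sumGH //; case: n hn {hnN hs N}.
  move=> j _; case: ifP => h; first by rewrite (Prow j hnN).
  change ((Gp N * Fp N ^+ j)`_n) with (Lc N n j).
  by rewrite -(Prow j hnN) nth_default ?mul0r //; rewrite leqNgt h.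
Qed.
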